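(* Let $\iota:B\to A$ be an injective homomorphism of groups such that $\iota(B)$ is normal in $A$, and let $q:A\to B$ satisfy (ZL1), (ZL2), (ZL3). Then there is a subgroup $X$ of $A$ such that $A$ is the internal semidirect product $\iota(B)\rtimes X$ (i.e. $\iota(B)\trianglelefteq A$, $\iota(B)X=A$, $\iota(B)\cap X=\{1_A\}$) and $q$ is the projection onto the first factor: $q(\iota(b)x)=b$ for all $b\in B$, $x\in X$.
   Context: For a homomorphism $\iota:B\to A$, conditions on $q:A\to B$: (ZL1) $q(1_A)=1_B$; (ZL2) $q(\iota(b)a)=b\,q(a)$ for all $a\in A,b\in B$; (ZL3) $q(aa')=q(a\,\iota(q(a')))$ for all $a,a'\in A$. These maps are exactly the $\mathsf T^l_\iota$-algebra structures on $(B,m_B)$ (algebras for the monad $A\otimes_B-$ on left $B$-sets induced by $\iota$). *)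

(* Defs.v *)
Record Group := {
  carrier :> Type;
  gmul : carrier -> carrier -> carrier;
  gone : carrier;
  ginv : carrier -> carrier;
  gmul_assoc : forall x y z, gmul x (gmul y z) = gmul (gmul x y) z;
  gmul_1l : forall x, gmul gone x = x;
  gmul_1r : forall x, gmul x gone = x;
  gmul_Vl : forall x, gmul (ginv x) x = gone;
  gmul_Vr : forall x, gmul x (ginv x) = gone
}.

Arguments gmul {g} _ _.
Arguments gone {g}.
Arguments ginv {g} _.

Definition is_hom (B A : Group) (f : B -> A) : Prop :=
  forall b b' : B, f (gmul b b') = gmul (f b) (f b').

Definition injective_map {X Y : Type} (f : X -> Y) : Prop :=
  forall x y, f x = f y -> x = y.

Definition image_normal (B A : Group) (f : B -> A) : Prop :=
  forall (a : A) (b : B), exists b' : B, gmul (gmul a (f b)) (ginv a) = f b'.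

Definition is_subgroup (A : Group) (X : A -> Prop) : Prop :=
  X gone /\ (forall x y, X x -> X y -> X (gmul x y)) /\ (forall x, X x -> X (ginv x)).

Definition ZL1 (B A : Group) (iota : B -> A) (q : A -> B) : Prop :=
  q gone = gone.
Definition ZL2 (B A : Group) (iota : B -> A) (q : A -> B) : Prop :=
  forall (a : A) (b : B), q (gmul (iota b) a) = gmul b (q a).
Definition ZL3 (B A : Group) (iota : B -> A) (q : A -> B) : Prop :=
  forall a a' : A, q (gmul a a') = q (gmul a (iota (q a'))).

Definition internal_semidirect (B A : Group) (iota : B -> A) (X : A -> Prop) : Prop :=
  image_normal B A iota /\
  (forall a : A, exists (b : B) (x : A), X x /\ a = gmul (iota b) x) /\
  (forall a : A, (exists b : B, a = iota b) -> X a -> a = gone).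

(* Main.v *)
Require Import Defs.

Lemma gcancel_l (G : Group) (x y z : G) : gmul x y = gmul x z -> y = z.
Proof.
  intro H. rewrite <- (gmul_1l G y), <- (gmul_1l G z), <- (gmul_Vl G x).
  rewrite <- !gmul_assoc, H. reflexivity.
Qed.

Lemma hom1 (B A : Group) (f : B -> A) : is_hom B A f -> f gone = gone.
Proof.
  intro h. apply (gcancel_l A (f gone)). rewrite <- h, !gmul_1r. reflexivity.
Qed.

Lemma homV (B A : Group) (f : B -> A) (b : B) : is_hom B A f -> f (ginv b) = ginv (f b).
Proof.
  intro h. apply (gcancel_l A (f b)). rewrite <- h, !gmul_Vr. apply hom1; auto.
Qed.

Theorem proposition4p5 (B A : Group) (iota : B -> A) (q : A -> B) :
  is_hom B A iota -> injective_map iota -> image_normal B A iota ->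
  ZL1 B A iota q -> ZL2 B A iota q -> ZL3 B A iota q ->
  exists X : A -> Prop,
    is_subgroup A X /\ internal_semidirect B A iota X /\
    (forall (b : B) (x : A), X x -> q (gmul (iota b) x) = b).
Proof.
  intros hom inj nor z1 z2 z3.
  assert (qi : forall b, q (iota b) = b).
  { intro b. rewrite <- (gmul_1r A (iota b)), z2, z1, gmul_1r. reflexivity. }
  assert (i1 := hom1 B A iota hom).
  exists (fun x => q x = gone).
  split; [split; [exact z1|split]|split; [split; [exact nor|split]|]].
  - intros x y hx hy. rewrite z3, hy, i1, gmul_1r. exact hx.
  - intros x hx. set (c := q (ginv x)).
    destruct (nor x c) as [c' hc'].
    assert (E : gmul x (iota c) = gmul (iota c') x).
    { rewrite <- hc', <- !gmul_assoc, gmul_Vl, gmul_1r. reflexivity. }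
    assert (H1 : q (gmul x (iota c)) = gone).
    { unfold c. rewrite <- z3, gmul_Vr. exact z1. }
    rewrite E, z2, hx, gmul_1r in H1.
    rewrite H1, i1 in hc'.
    assert (iota c = gone).
    { apply (gcancel_l A x). rewrite gmul_1r.
      rewrite <- (gmul_1r A (gmul x (iota c))), <- (gmul_Vl A x), gmul_assoc, hc', gmul_1l.
      reflexivity. }
    apply inj. rewrite H, i1. reflexivity.
  - intro a. exists (q a), (gmul (iota (ginv (q a))) a). split.
    + rewrite z2, gmul_Vl. reflexivity.
    + rewrite gmul_assoc, <- hom, gmul_Vr, i1, gmul_1l. reflexivity.
  - intros a [b ->] hx. rewrite qi in hx. rewrite hx. exact i1.
  - intros b x hx. rewrite z2, hx, gmul_1r. reflexivity.
Qed.
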